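(* Assume $\mathcal E$ is stable under pullback. Let $c$ be a closure operator on $\mathcal A$ and let $X\in\mathcal X$ be $c^\rho$-compact. Factor $\rho_X=\rho_X^{\mathcal M}\rho_X^{\mathcal E}$ with $\rho_X^{\mathcal E}\in\mathcal E$, $\rho_X^{\mathcal M}\in\mathcal M$, and let $R^{\mathcal E}X$ denote the codomain of $\rho_X^{\mathcal E}$. Then: (a) $R^{\mathcal E}X$ is $c^\rho$-compact; (b) if $RX$ is $c$-separated, then $\rho_X\in\mathcal E$ and $RX$ is $c$-compact.
   Context: Standing setting. $\mathcal X$ and $\mathcal A$ are finitely complete categories; $\mathcal X$ carries a proper factorization system $(\mathcal E,\mathcal M)$ and $\mathcal A$ a proper factorization system $(\mathcal F,\mathcal N)$ (proper: every member of $\mathcal E$, resp. $\mathcal F$, is an epimorphism and every member of $\mathcal M$, resp. $\mathcal N$, is a monomorphism). $\mathcal A$ is a full reflective subcategory of $\mathcal X$ with reflector $R:\mathcal X\to\mathcal A$ and reflection (unit) $\rho_X:X\to RX$; as in the paper's setting, $\mathcal N\subseteq\mathcal M$ and $R\mathcal E\subseteq\mathcal F$. For $X\in\mathcal X$, $\operatorname{sub}X$ is the class $\mathcal M/X$ of $\mathcal M$-morphisms with codomain $X$, preordered by $m\le n$ iff $m=nj$ for some morphism $j$; for $A\in\mathcal A$, $\operatorname{sub}_{\mathcal A}A=\mathcal N/A$ with the same preorder. For $f:X\to Y$ and $m\in\operatorname{sub}X$, the image $f(m)\in\operatorname{sub}Y$ is the $\mathcal M$-part of the $(\mathcal E,\mathcal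 M)$-factorization of $fm$, and for $n\in\operatorname{sub}Y$ the preimage $f^{-1}(n)\in\operatorname{sub}X$ is the pullback of $n$ along $f$ (analogously in $\mathcal A$ using $(\mathcal F,\mathcal N)$). A closure operator $c$ on $\mathcal A$ (with respect to $\mathcal N$) is a family of maps $c_A:\operatorname{sub}_{\mathcal A}A\to\operatorname{sub}_{\mathcal A}A$ ($A\in\mathcal A$) such that $m\le c_A(m)$, $m\le n\Rightarrow c_A(m)\le c_A(n)$, and $f(c_A(m))\le c_B(f(m))$ for every morphism $f:A\to B$ of $\mathcal A$; closure operators on $\mathcal X$ (with respect to $\mathcal M$) are defined likewise. For an arbitrary morphism $g:M\to A$ of $\mathcal A$, write $g(1_M)$ for the $\mathcal N$-part of its $(\mathcal F,\mathcal N)$-factorization and put $c_A(g):=c_A(g(1_M))$. The $R$-initial lift of $c$ is the closure operator $c^\rho$ on $\mathcal X$ given by $c^\rho_X(m)=\rho_X^{-1}(c_{RX}(Rm))$ for $X\in\mathcal X$, $m\in\operatorname{sub}X$. A subobject $m$ is $c$-closed if $c(m)=m$; an object $A$ is $c$-separated if its diagonal $\delta_A:A\to A\times A$ is $c$-closed. For a closure operator $d$ on a category, an object $X$ is $d$-compact if for every object $Y$ the projection $\pi_Y:X\times Y\to Y$ is $d$-preserving, i.e. $\pi_Y(d_{X\times Y}(m))=d_Y(\pi_Y(m))$ for every subobject $m$ of $X\times Y$ (for $c$-compactness of an object of $\mathcal A$, $Y$ ranges over $\mathcal A$ and subobjects over $\operatorname{sub}_{\mathcal A}$; for $c^\rho$-compactness,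 over $\mathcal X$ and $\operatorname{sub}$). *)

(* Defs.v *)
Set Implicit Arguments.
Unset Strict Implicit.

Record Category := {
  ob :> Type;
  hom : ob -> ob -> Type;
  idm : forall a, hom a a;
  comp : forall a b c, hom b c -> hom a b -> hom a c;
  comp_id_l : forall a b (f : hom a b), comp (idm b) f = f;
  comp_id_r : forall a b (f : hom a b), comp f (idm a) = f;
  comp_assoc : forall a b c d (h : hom c d) (g : hom b c) (f : hom a b),
      comp h (comp g f) = comp (comp h g) f }.

Arguments hom {_} _ _.
Arguments idm {_} _.
Arguments comp {_ _ _ _} _ _.
Declare Scope cat_scope.
Notation "g ∘ f" := (comp g f) (at level 40, left associativity) : cat_scope.
Open Scope cat_scope.

Definition MorClass (C : Category) := forall (a b : C), hom a b -> Prop.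

Definition is_mono {C : Category} {a b : C} (f : hom a b) :=
  forall z (u v : hom z a), f ∘ u = f ∘ v -> u = v.
Definition is_epi {C : Category} {a b : C} (f : hom a b) :=
  forall z (u v : hom b z), u ∘ f = v ∘ f -> u = v.
Definition is_iso {C : Category} {a b : C} (f : hom a b) :=
  exists g : hom b a, g ∘ f = idm a /\ f ∘ g = idm b.

Definition is_pullback {C : Category} {a b c p : C}
    (f : hom a c) (g : hom b c) (p1 : hom p a) (p2 : hom p b) :=
  f ∘ p1 = g ∘ p2 /\
  forall q (q1 : hom q a) (q2 : hom q b), f ∘ q1 = g ∘ q2 ->
    exists u : hom q p, (p1 ∘ u = q1 /\ p2 ∘ u = q2) /\
      forall u' : hom q p, p1 ∘ u' = q1 -> p2 ∘ u' = q2 -> u' = u.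

Record FinComplete (C : Category) := {
  term : C;
  term_mor : forall a : C, hom a term;
  term_uniq : forall a (u : hom a term), u = term_mor a;
  prod : C -> C -> C;
  pr1 : forall a b, hom (prod a b) a;
  pr2 : forall a b, hom (prod a b) b;
  pairing : forall q a b, hom q a -> hom q b -> hom q (prod a b);
  pairing_pr1 : forall q a b (f : hom q a) (g : hom q b), pr1 a b ∘ pairing f g = f;
  pairing_pr2 : forall q a b (f : hom q a) (g : hom q b), pr2 a b ∘ pairing f g = g;
  pairing_uniq : forall q a b (u : hom q (prod a b)),
      u = pairing (pr1 a b ∘ u) (pr2 a b ∘ u);
  pb : forall a b c, hom a c -> hom b c -> C;
  pb1 : forall a b c (f : hom a c) (g : hom b c), hom (pb f g) a;
  pb2 : forall a b c (f : hom a c) (g : hom b c), hom (pb f g) b;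
  pb_is_pullback : forall a b c (f : hom a c) (g : hom b c),
      is_pullback f g (pb1 f g) (pb2 f g) }.

Arguments prod {_} _ _ _.
Arguments pr1 {_} _ _ _.
Arguments pr2 {_} _ _ _.
Arguments pairing {_} _ {_ _ _} _ _.
Arguments pb {_} _ {_ _ _} _ _.
Arguments pb1 {_} _ {_ _ _} _ _.
Arguments pb2 {_} _ {_ _ _} _ _.

Definition diag {C : Category} (L : FinComplete C) (a : C) : hom a (prod L a a) :=
  pairing L (idm a) (idm a).

Record FactSys (C : Category) := {
  fE : MorClass C;
  fM : MorClass C;
  E_iso : forall a b (f : hom a b), is_iso f -> fE f;
  M_iso : forall a b (f : hom a b), is_iso f -> fM f;
  E_comp_iso : forall a b c (e : hom a b) (h : hom b c) (h' : hom c a),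
      fE e -> is_iso h -> is_iso h' -> fE (h ∘ e) /\ fE (e ∘ h');
  M_comp_iso : forall a b c (m : hom a b) (h : hom b c) (h' : hom c a),
      fM m -> is_iso h -> is_iso h' -> fM (h ∘ m) /\ fM (m ∘ h');
  fmid : forall a b, hom a b -> C;
  fe : forall a b (f : hom a b), hom a (fmid f);
  fm : forall a b (f : hom a b), hom (fmid f) b;
  fe_E : forall a b (f : hom a b), fE (fe f);
  fm_M : forall a b (f : hom a b), fM (fm f);
  fact_eq : forall a b (f : hom a b), fm f ∘ fe f = f;
  diagonal : forall a b c d (e : hom a b) (m : hom c d) (u : hom a c) (v : hom b d),
      fE e -> fM m -> v ∘ e = m ∘ u ->
      exists w : hom b c, (w ∘ e = u /\ m ∘ w = v) /\
        forall w' : hom b c, w' ∘ e = u -> m ∘ w' = v -> w' = w }.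

Arguments fE {_} _ {_ _} _.
Arguments fM {_} _ {_ _} _.
Arguments fmid {_} _ {_ _} _.
Arguments fe {_} _ {_ _} _.
Arguments fm {_} _ {_ _} _.

Definition proper {C : Category} (F : FactSys C) :=
  (forall a b (f : hom a b), fE F f -> is_epi f) /\
  (forall a b (f : hom a b), fM F f -> is_mono f).

Record Functor (C D : Category) := {
  F0 :> C -> D;
  F1 : forall a b, hom a b -> hom (F0 a) (F0 b);
  F1_id : forall a, F1 (idm a) = idm (F0 a);
  F1_comp : forall a b c (g : hom b c) (f : hom a b), F1 (g ∘ f) = F1 g ∘ F1 f }.
Arguments F1 {_ _} _ {_ _} _.

Record Setting := {
  X : Category;
  A : Category;
  XL : FinComplete X;
  AL : FinComplete A;
  XF : FactSys X;
  AF : FactSys A;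
  XF_proper : proper XF;
  AF_proper : proper AF;
  Inc : Functor A X;
  Inc_inj : forall a b : A, Inc a = Inc b -> a = b;
  Inc_full : forall (a b : A) (f : hom (Inc a) (Inc b)), exists g : hom a b, F1 Inc g = f;
  Inc_faithful : forall (a b : A) (g g' : hom a b), F1 Inc g = F1 Inc g' -> g = g';
  Rf : Functor X A;
  rho : forall x : X, hom x (Inc (Rf x));
  rho_nat : forall (x y : X) (f : hom x y), F1 Inc (F1 Rf f) ∘ rho x = rho y ∘ f;
  rho_univ : forall (x : X) (a : A) (f : hom x (Inc a)),
      exists g : hom (Rf x) a, F1 Inc g ∘ rho x = f /\
        forall g' : hom (Rf x) a, F1 Inc g' ∘ rho x = f -> g' = g;
  N_sub_M : forall (a b : A) (n : hom a b), fM AF n -> fM XF (F1 Inc n);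
  RE_sub_F : forall (x y : X) (e : hom x y), fE XF e -> fE AF (F1 Rf e) }.

Arguments X : clear implicits.
Arguments A : clear implicits.
Arguments XL : clear implicits.
Arguments AL : clear implicits.
Arguments XF : clear implicits.
Arguments AF : clear implicits.
Arguments XF_proper : clear implicits.
Arguments AF_proper : clear implicits.
Arguments Inc : clear implicits.
Arguments Inc_inj : clear implicits.
Arguments Inc_full : clear implicits.
Arguments Inc_faithful : clear implicits.
Arguments Rf : clear implicits.
Arguments rho : clear implicits.
Arguments rho_nat : clear implicits.
Arguments rho_univ : clear implicits.
Arguments N_sub_M : clear implicits.
Arguments RE_sub_F : clear implicits.

Definition E_pullback_stable (S : Setting) :=
  forall (a b c p : X S) (f : hom a c) (g : hom b c) (p1 : hom p a) (p2 : hom p b),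
    is_pullback f g p1 p2 -> fE (XF S) g -> fE (XF S) p1.

(* morphisms with codomain x; subobjects are those whose arrow lies in M (resp. N) *)
Record arr {C : Category} (x : C) := Arr { adom : C; amor : hom adom x }.
Arguments Arr {_ _ _} _.
Arguments adom {_ _} _.
Arguments amor {_ _} _.

Definition sub_le {C : Category} {x : C} (m n : arr x) :=
  exists j : hom (adom m) (adom n), amor m = amor n ∘ j.
Definition sub_eq {C : Category} {x : C} (m n : arr x) := sub_le m n /\ sub_le n m.

Definition image {C : Category} (F : FactSys C) {x y : C} (f : hom x y) (m : arr x) : arr y :=
  Arr (fm F (f ∘ amor m)).
(* g(1_M): M-part of the factorization of an arbitrary morphism g *)
Definition mpart {C : Category} (F : FactSys C) {a b : C} (g : hom a b) : arr b :=
  Arr (fm F g).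
Definition preimage {C : Category} (L : FinComplete C) {x y : C} (f : hom x y) (n : arr y) : arr x :=
  Arr (pb1 L f (amor n)).

Record ClosureOp {C : Category} (F : FactSys C) := {
  cl : forall a : C, arr a -> arr a;
  cl_sub : forall a (m : arr a), fM F (amor m) -> fM F (amor (cl m));
  cl_ext : forall a (m : arr a), fM F (amor m) -> sub_le m (cl m);
  cl_mono : forall a (m n : arr a), fM F (amor m) -> fM F (amor n) ->
      sub_le m n -> sub_le (cl m) (cl n);
  cl_cont : forall a b (f : hom a b) (m : arr a), fM F (amor m) ->
      sub_le (image F f (cl m)) (cl (image F f m)) }.
Arguments cl {_ _} _ {_} _.

(* c_A(g) := c_A(g(1_M)) for an arbitrary morphism g *)
Definition clg {C : Category} {F : FactSys C} (c : ClosureOp F) {a b : C} (g : hom a b) : arr b :=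
  cl c (mpart F g).

Definition Inc_arr (S : Setting) {a : A S} (n : arr a) : arr (Inc S a) :=
  Arr (F1 (Inc S) (amor n)).
Definition crho (S : Setting) (c : ClosureOp (AF S)) (x : X S) (m : arr x) : arr x :=
  preimage (XL S) (rho S x) (Inc_arr (clg c (F1 (Rf S) (amor m)))).

Definition c_closed {C : Category} {F : FactSys C} (c : ClosureOp F) {a b : C} (g : hom a b) :=
  sub_eq (clg c g) (Arr g).
Definition c_separated {C : Category} (L : FinComplete C) {F : FactSys C}
    (c : ClosureOp F) (a : C) := c_closed c (diag L a).

Definition compact {C : Category} (L : FinComplete C) (F : FactSys C)
    (d : forall a : C, arr a -> arr a) (x : C) :=
  forall (y : C) (m : arr (prod L x y)), fM F (amor m) ->
    sub_eq (image F (pr2 L x y) (d _ m)) (d y (image F (pr2 L x y) m)).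

(* Main.v *)
Require Import Defs.

Ltac lassoc := repeat rewrite comp_assoc.
Ltac rassoc := repeat rewrite <- comp_assoc.

Lemma iso_id {C : Category} (a : C) : is_iso (idm a).
Proof. exists (idm a). split; apply comp_id_l. Qed.

Lemma sub_le_refl {C : Category} {x : C} (m : arr x) : sub_le m m.
Proof. exists (idm _). now rewrite comp_id_r. Qed.

Lemma sub_le_trans {C : Category} {x : C} (m n p : arr x) :
  sub_le m n -> sub_le n p -> sub_le m p.
Proof. intros [j Hj] [k Hk]. exists (k ∘ j). rewrite Hj, Hk. symmetry; apply comp_assoc. Qed.

Lemma pairing_comp {C : Category} (L : FinComplete C) {q r a b : C}
  (f : hom q a) (g : hom q b) (h : hom r q) :
  pairing L f g ∘ h = pairing L (f ∘ h) (g ∘ h).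
Proof.
  rewrite (pairing_uniq (pairing L f g ∘ h)).
  rewrite !comp_assoc, pairing_pr1, pairing_pr2. reflexivity.
Qed.

Lemma pairing_ext {C : Category} (L : FinComplete C) {q a b : C} (u v : hom q (prod L a b)) :
  pr1 L a b ∘ u = pr1 L a b ∘ v -> pr2 L a b ∘ u = pr2 L a b ∘ v -> u = v.
Proof.
  intros H1 H2. rewrite (pairing_uniq u), (pairing_uniq v), H1, H2. reflexivity.
Qed.

Lemma pb_sym {C : Category} {a b c p : C} (f : hom a c) (g : hom b c) (p1 : hom p a) (p2 : hom p b) :
  is_pullback f g p1 p2 -> is_pullback g f p2 p1.
Proof.
  intros [Hc Hu]. split; [symmetry; exact Hc|].
  intros q q1 q2 Hq. destruct (Hu q q2 q1 (eq_sym Hq)) as [u [[U1 U2] Uu]].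
  exists u. split; [split; assumption|]. intros u' H1 H2. apply Uu; assumption.
Qed.

Section Gen.
Context {C : Category} (F : FactSys C).

Lemma mpart_le_M {a b c : C} (f : hom a b) (k : hom c b) (h : hom a c) :
  fM F k -> f = k ∘ h -> sub_le (mpart F f) (Arr k).
Proof.
  intros Hk Hf.
  assert (Hsq : fm F f ∘ fe F f = k ∘ h) by (rewrite fact_eq; exact Hf).
  destruct (diagonal (fe_E F f) Hk Hsq) as [w [[W1 W2] _]].
  exists w. simpl. symmetry. exact W2.
Qed.

Lemma mpart_comp_le {a b c : C} (f : hom b c) (h : hom a b) :
  sub_le (mpart F (f ∘ h)) (mpart F f).
Proof.
  apply (mpart_le_M _ _ (fe F f ∘ h) (fm_M F f)).
  rewrite comp_assoc, fact_eq. reflexivity.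
Qed.

Lemma arr_le_mpart {a b : C} (f : hom a b) : sub_le (Arr f) (mpart F f).
Proof. exists (fe F f). simpl. symmetry. apply fact_eq. Qed.

Lemma mpart_le_compE {a b c : C} (f : hom b c) (e : hom a b) :
  fE F e -> sub_le (mpart F f) (mpart F (f ∘ e)).
Proof.
  intros He.
  assert (Hsq : f ∘ e = fm F (f ∘ e) ∘ fe F (f ∘ e)) by (symmetry; apply fact_eq).
  destruct (diagonal He (fm_M F (f ∘ e)) Hsq) as [w [[W1 W2] _]].
  apply (mpart_le_M _ _ w (fm_M F _)). symmetry; exact W2.
Qed.

Lemma image_mono {x y : C} (f : hom x y) (m1 m2 : arr x) :
  sub_le m1 m2 -> sub_le (image F f m1) (image F f m2).
Proof.
  intros [j Hj]. change (sub_le (mpart F (f ∘ amor m1)) (mpart F (f ∘ amor m2))).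
  rewrite Hj, comp_assoc. apply mpart_comp_le.
Qed.

Hypothesis Hp : proper F.

Lemma M_mono {a b : C} (m : hom a b) : fM F m -> is_mono m.
Proof. destruct Hp as [_ H]. apply H. Qed.
Lemma E_epi {a b : C} (m : hom a b) : fE F m -> is_epi m.
Proof. destruct Hp as [H _]. apply H. Qed.

Lemma pb_fm_section {a b c p : C} (f : hom a c) (n : hom b c) (p1 : hom p a) (p2 : hom p b) :
  fM F n -> is_pullback f n p1 p2 -> exists u, p1 ∘ u = fm F p1.
Proof.
  intros Hn [Hc Hu].
  assert (Hsq : (f ∘ fm F p1) ∘ fe F p1 = n ∘ p2) by (rewrite <- comp_assoc, fact_eq; exact Hc).
  destruct (diagonal (fe_E F p1) Hn Hsq) as [w [[W1 W2] _]].
  destruct (Hu _ (fm F p1) w (eq_sym W2)) as [u [[U1 U2] Uu]].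
  exists u. exact U1.
Qed.

Lemma M_split_epi_iso {a b : C} (m : hom a b) (w : hom b a) :
  fM F m -> m ∘ w = idm b -> is_iso m.
Proof.
  intros Hm Hw. exists w. split; [|exact Hw].
  apply (M_mono _ Hm). rewrite comp_assoc, Hw, comp_id_l, comp_id_r. reflexivity.
Qed.

End Gen.


Section EImage.
Context {C : Category} (L : FinComplete C) (F : FactSys C) (Hp : proper F).
Hypothesis HE : forall (a b c p : C) (f : hom a c) (g : hom b c) (p1 : hom p a) (p2 : hom p b),
    is_pullback f g p1 p2 -> fE F g -> fE F p1.
Variable d : forall a : C, arr a -> arr a.
Hypothesis dmono : forall a (m n : arr a), sub_le m n -> sub_le (d a m) (d a n).
Hypothesis dcont : forall a b (f : hom a b) (m : arr a),
    sub_le (image F f (d a m)) (d b (image F f m)).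

Lemma E_image_compact (x z : C) (e : hom x z) :
  fE F e -> compact L F d x -> compact L F d z.
Proof.
  intros He Hx Y m Hm.
  set (g := pairing L (e ∘ pr1 L x Y) (pr2 L x Y)).
  assert (Hg2 : pr2 L z Y ∘ g = pr2 L x Y) by apply pairing_pr2.
  assert (Hg1 : pr1 L z Y ∘ g = e ∘ pr1 L x Y) by apply pairing_pr1.
  assert (Hpb : is_pullback (pr1 L z Y) e g (pr1 L x Y)).
  { split; [exact Hg1|]. intros q q1 q2 Hq.
    exists (pairing L q2 (pr2 L z Y ∘ q1)). split; [split|].
    - unfold g. rewrite pairing_comp, <- comp_assoc, !pairing_pr1, pairing_pr2.
      apply pairing_ext; rewrite ?pairing_pr1, ?pairing_pr2; [exact (eq_sym Hq)|reflexivity].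
    - apply pairing_pr1.
    - intros u' H1 H2. apply pairing_ext; rewrite ?pairing_pr1, ?pairing_pr2; [exact H2|].
      rewrite <- H1, comp_assoc, Hg2. reflexivity. }
  assert (HgE : fE F g) by exact (HE _ _ _ _ _ _ _ _ Hpb He).
  pose proof (pb_is_pullback L g (amor m)) as Hpbn.
  set (P := pb1 L g (amor m)) in *.
  set (e' := pb2 L g (amor m)) in *.
  assert (He' : fE F e') by exact (HE _ _ _ _ _ _ _ _ (pb_sym _ _ _ _ Hpbn) HgE).
  destruct (pb_fm_section F _ _ _ _ Hm Hpbn) as [u Hu].
  assert (Hsq : g ∘ P = amor m ∘ e') by (destruct Hpbn; assumption).
  set (n := mpart F P).
  assert (HnM : fM F (amor n)) by apply fm_M.
  destruct (Hx Y n HnM) as [_ Hx2].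
  split; [apply dcont|].
  eapply sub_le_trans; [|eapply sub_le_trans; [exact Hx2|]].
  - apply dmono.
    change (sub_le (mpart F (pr2 L z Y ∘ amor m)) (mpart F (pr2 L x Y ∘ fm F P))).
    eapply sub_le_trans; [apply (mpart_le_compE F _ _ He')|].
    rewrite <- comp_assoc, <- Hsq, comp_assoc, Hg2.
    replace (pr2 L x Y ∘ P) with ((pr2 L x Y ∘ fm F P) ∘ fe F P)
      by (rewrite <- comp_assoc, fact_eq; reflexivity).
    apply mpart_comp_le.
  - destruct (dcont _ _ g n) as [j1 Hj1].
    assert (Hle : sub_le (image F g n) m).
    { destruct m as [md mm]. simpl in *.
      apply (mpart_le_M F _ _ (e' ∘ u) Hm).
      simpl. rewrite <- Hu, comp_assoc, Hsq. symmetry; apply comp_assoc. }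
    destruct (dmono _ _ _ Hle) as [j2 Hj2].
    change (sub_le (mpart F (pr2 L x Y ∘ amor (d _ n))) (mpart F (pr2 L z Y ∘ amor (d _ m)))).
    rewrite <- Hg2, <- comp_assoc, <- (fact_eq F (g ∘ amor (d _ n))).
    simpl in Hj1. rewrite Hj1, Hj2. idtac.
    rewrite <- (comp_assoc _ j2 j1), <- (comp_assoc _ (j2 ∘ j1)), comp_assoc.
    apply mpart_comp_le.
Qed.

End EImage.


Lemma pb_mpart_le {C : Category} (F : FactSys C) {a b c p : C} (f : hom a c) (n : hom b c)
  (p1 : hom p a) (p2 : hom p b) :
  fM F n -> is_pullback f n p1 p2 -> sub_le (mpart F p1) (Arr p1).
Proof.
  intros Hn Hpb. destruct (pb_fm_section F _ _ _ _ Hn Hpb) as [u Hu].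
  exists u. simpl. symmetry. exact Hu.
Qed.

Lemma cl_mono_mp {C : Category} {F : FactSys C} (c : ClosureOp F) {a b b' : C}
  (f : hom b a) (g : hom b' a) :
  sub_le (mpart F f) (mpart F g) -> sub_le (cl c (mpart F f)) (cl c (mpart F g)).
Proof. intros H. apply (cl_mono c); [apply fm_M|apply fm_M|exact H]. Qed.

Section Sett.
Variable S : Setting.

Lemma rho_Inc_inv (a : A S) : exists g : hom (Rf S (Inc S a)) a,
  F1 (Inc S) g ∘ rho S (Inc S a) = idm _ /\ rho S (Inc S a) ∘ F1 (Inc S) g = idm _.
Proof.
  destruct (rho_univ S (Inc S a) a (idm _)) as [g [Hg _]].
  exists g. split; [exact Hg|].
  destruct (Inc_full S _ _ (rho S (Inc S a) ∘ F1 (Inc S) g)) as [w Hw].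
  destruct (rho_univ S (Inc S a) _ (rho S (Inc S a))) as [g0 [_ Hu]].
  assert (E1 : w = g0).
  { apply Hu. rewrite Hw, <- comp_assoc, Hg, comp_id_r. reflexivity. }
  assert (E2 : idm _ = g0).
  { apply Hu. rewrite F1_id, comp_id_l. reflexivity. }
  rewrite <- Hw, E1, <- E2, F1_id. reflexivity.
Qed.

Lemma Inc_R_rho (x : X S) : F1 (Inc S) (F1 (Rf S) (rho S x)) = rho S (Inc S (Rf S x)).
Proof.
  destruct (Inc_full S _ _ (rho S (Inc S (Rf S x)))) as [w Hw].
  destruct (rho_univ S x _ (rho S (Inc S (Rf S x)) ∘ rho S x)) as [g0 [_ Hu]].
  rewrite <- Hw. f_equal.
  rewrite (Hu (F1 (Rf S) (rho S x))), (Hu w); try reflexivity.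
  - rewrite Hw. reflexivity.
  - apply rho_nat.
Qed.

Lemma R_rho_sect (x : X S) : exists g, F1 (Rf S) (rho S x) ∘ g = idm _.
Proof.
  destruct (rho_Inc_inv (Rf S x)) as [g [_ Hg]].
  exists g. apply (Inc_faithful S). rewrite F1_comp, F1_id, Inc_R_rho. exact Hg.
Qed.

Lemma r_nat (a b : A S) (g : hom a b) (ra : hom a (Rf S (Inc S a))) (rb : hom b (Rf S (Inc S b))) :
  F1 (Inc S) ra = rho S (Inc S a) -> F1 (Inc S) rb = rho S (Inc S b) ->
  F1 (Rf S) (F1 (Inc S) g) ∘ ra = rb ∘ g.
Proof.
  intros Ha Hb. apply (Inc_faithful S). rewrite !F1_comp, Ha, Hb. apply rho_nat.
Qed.

Variable c : ClosureOp (AF S).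

Lemma crho_pb (x : X S) (m : arr x) :
  is_pullback (rho S x) (F1 (Inc S) (amor (cl c (mpart (AF S) (F1 (Rf S) (amor m))))))
     (amor (crho c m)) (pb2 (XL S) (rho S x) (F1 (Inc S) (amor (cl c (mpart (AF S) (F1 (Rf S) (amor m))))))).
Proof. apply pb_is_pullback. Qed.

Lemma crho_Mcl (x : X S) (m : arr x) :
  fM (XF S) (F1 (Inc S) (amor (cl c (mpart (AF S) (F1 (Rf S) (amor m)))))).
Proof. apply N_sub_M. apply cl_sub. apply fm_M. Qed.

Lemma crho_M_le (x : X S) (m : arr x) : sub_le (mpart (XF S) (amor (crho c m))) (crho c m).
Proof. exact (pb_mpart_le _ _ _ _ _ (crho_Mcl x m) (crho_pb x m)). Qed.

Lemma crho_mono (x : X S) (m n : arr x) : sub_le m n -> sub_le (crho c m) (crho c n).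
Proof.
  intros [j Hj].
  assert (H : sub_le (mpart (AF S) (F1 (Rf S) (amor m))) (mpart (AF S) (F1 (Rf S) (amor n)))).
  { rewrite Hj, F1_comp. apply mpart_comp_le. }
  destruct (cl_mono_mp c _ _ H) as [k Hk].
  destruct (crho_pb x n) as [_ Hu]. destruct (crho_pb x m) as [Hcm _].
  edestruct (Hu _ (amor (crho c m)) (F1 (Inc S) k ∘ pb2 (XL S) (rho S x)
     (F1 (Inc S) (amor (cl c (mpart (AF S) (F1 (Rf S) (amor m)))))))) as [u [[U1 _] _]].
  2:{ exists u. symmetry. exact U1. }
  rewrite Hcm, comp_assoc, <- F1_comp, <- Hk. reflexivity.
Qed.

Lemma crho_cont (x y : X S) (f : hom x y) (m : arr x) :
  sub_le (image (XF S) f (crho c m)) (crho c (image (XF S) f m)).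
Proof.
  set (Clm := cl c (mpart (AF S) (F1 (Rf S) (amor m)))).
  set (Cl' := cl c (mpart (AF S) (F1 (Rf S) (amor (image (XF S) f m))))).
  destruct (cl_cont c (F1 (Rf S) f) (m := mpart (AF S) (F1 (Rf S) (amor m))) (fm_M _ _)) as [j1 Hj1].
  assert (Hle : sub_le (image (AF S) (F1 (Rf S) f) (mpart (AF S) (F1 (Rf S) (amor m))))
                       (mpart (AF S) (F1 (Rf S) (amor (image (XF S) f m))))).
  { change (sub_le (mpart (AF S) (F1 (Rf S) f ∘ fm (AF S) (F1 (Rf S) (amor m))))
                   (mpart (AF S) (F1 (Rf S) (fm (XF S) (f ∘ amor m))))).
    eapply sub_le_trans; [apply (mpart_le_compE _ _ _ (fe_E _ (F1 (Rf S) (amor m))))|].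
    rewrite <- comp_assoc, fact_eq, <- F1_comp.
    replace (F1 (Rf S) (f ∘ amor m)) with
      (F1 (Rf S) (fm (XF S) (f ∘ amor m)) ∘ F1 (Rf S) (fe (XF S) (f ∘ amor m)))
      by (rewrite <- F1_comp, fact_eq; reflexivity).
    apply mpart_comp_le. }
  destruct (cl_mono_mp c _ _ Hle) as [j2 Hj2].
  fold Clm in Hj1. fold Cl' in Hj2. simpl in Hj1.
  assert (Hk : F1 (Rf S) f ∘ amor Clm = amor Cl' ∘ (j2 ∘ j1 ∘ fe (AF S) (F1 (Rf S) f ∘ amor Clm))).
  { transitivity (fm (AF S) (F1 (Rf S) f ∘ amor Clm) ∘ fe (AF S) (F1 (Rf S) f ∘ amor Clm));
      [symmetry; apply fact_eq|].
    change (amor (cl c (image (AF S) (F1 (Rf S) f) (mpart (AF S) (F1 (Rf S) (amor m))))) = amor Cl' ∘ j2) in Hj2.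
    rewrite Hj1, Hj2. lassoc. reflexivity. }
  eapply sub_le_trans; [|apply crho_M_le].
  destruct (crho_pb y (image (XF S) f m)) as [_ Hu]. destruct (crho_pb x m) as [Hcm _].
  edestruct Hu as [u [[U1 _] _]].
  2:{ change (sub_le (mpart (XF S) (f ∘ amor (crho c m))) (mpart (XF S) (amor (crho c (image (XF S) f m))))).
      rewrite <- U1. apply mpart_comp_le. }
  rewrite comp_assoc, <- rho_nat, <- comp_assoc. fold Clm in Hcm. rewrite Hcm.
  fold Cl'. rewrite comp_assoc, <- F1_comp, Hk, F1_comp, <- comp_assoc. reflexivity.
Qed.

Lemma crho_top (x D : X S) (t : hom D (Inc S (Rf S x))) (s : hom x D) :
  t ∘ s = rho S x -> sub_le (Arr (idm _)) (crho c (Arr t)).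
Proof.
  intros Hts.
  destruct (R_rho_sect x) as [g Hg].
  destruct (cl_ext c (m := mpart (AF S) (F1 (Rf S) t)) (fm_M _ _)) as [j Hj]. simpl in Hj.
  set (Cl := cl c (mpart (AF S) (F1 (Rf S) t))) in *.
  assert (HT : amor Cl ∘ (j ∘ fe (AF S) (F1 (Rf S) t) ∘ F1 (Rf S) s ∘ g) = idm _).
  { lassoc. transitivity (fm (AF S) (F1 (Rf S) t) ∘ fe (AF S) (F1 (Rf S) t) ∘ F1 (Rf S) s ∘ g); [rewrite Hj; reflexivity|]. rewrite fact_eq, <- F1_comp, Hts. exact Hg. }
  destruct (crho_pb _ (Arr t)) as [_ Hu]. simpl in Hu.
  edestruct (Hu _ (idm _) (F1 (Inc S) (j ∘ fe (AF S) (F1 (Rf S) t) ∘ F1 (Rf S) s ∘ g) ∘ rho S _))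
    as [u [[U1 _] _]].
  2:{ exists u. simpl. symmetry. exact U1. }
  fold Cl. rewrite comp_assoc, <- F1_comp, HT, F1_id, comp_id_l, comp_id_r. reflexivity.
Qed.

End Sett.


Lemma prod_cmp (S : Setting) (a b : A S) :
  exists s : hom (Rf S (prod (XL S) (Inc S a) (Inc S b))) (prod (AL S) a b),
    F1 (Inc S) (pr1 (AL S) a b) ∘ (F1 (Inc S) s ∘ rho S _) = pr1 (XL S) _ _ /\
    F1 (Inc S) (pr2 (AL S) a b) ∘ (F1 (Inc S) s ∘ rho S _) = pr2 (XL S) _ _ /\
    (F1 (Inc S) s ∘ rho S _) ∘ pairing (XL S) (F1 (Inc S) (pr1 (AL S) a b)) (F1 (Inc S) (pr2 (AL S) a b)) = idm _.
Proof.
  destruct (rho_univ S (prod (XL S) (Inc S a) (Inc S b)) a (pr1 (XL S) _ _)) as [g1 [H1 _]].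
  destruct (rho_univ S (prod (XL S) (Inc S a) (Inc S b)) b (pr2 (XL S) _ _)) as [g2 [H2 _]].
  exists (pairing (AL S) g1 g2).
  assert (K1 : F1 (Inc S) (pr1 (AL S) a b) ∘ (F1 (Inc S) (pairing (AL S) g1 g2) ∘ rho S _) = pr1 (XL S) _ _).
  { rewrite comp_assoc, <- F1_comp, pairing_pr1. exact H1. }
  assert (K2 : F1 (Inc S) (pr2 (AL S) a b) ∘ (F1 (Inc S) (pairing (AL S) g1 g2) ∘ rho S _) = pr2 (XL S) _ _).
  { rewrite comp_assoc, <- F1_comp, pairing_pr2. exact H2. }
  split; [exact K1|split; [exact K2|]].
  destruct (Inc_full S _ _ ((F1 (Inc S) (pairing (AL S) g1 g2) ∘ rho S _) ∘
      pairing (XL S) (F1 (Inc S) (pr1 (AL S) a b)) (F1 (Inc S) (pr2 (AL S) a b)))) as [h Hh].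
  rewrite <- Hh. rewrite <- F1_id. f_equal.
  apply pairing_ext; apply (Inc_faithful S); rewrite F1_comp, Hh, F1_comp, F1_id, comp_id_r, comp_assoc.
  - rewrite K1. apply pairing_pr1.
  - rewrite K2. apply pairing_pr2.
Qed.

Lemma lift_le (S : Setting) {a b b' : A S} (f : hom b a) (g : hom b' a) :
  sub_le (Arr (F1 (Inc S) f)) (Arr (F1 (Inc S) g)) -> sub_le (Arr f) (Arr g).
Proof.
  intros [j Hj]. simpl in *. destruct (Inc_full S _ _ j) as [j' Hj']. subst j.
  exists j'. simpl. apply (Inc_faithful S). rewrite F1_comp. exact Hj.
Qed.


Lemma graph_closed (S : Setting) (c : ClosureOp (AF S)) (a : A S) (Z : X S) (m : hom Z (Inc S a)) :
  c_separated (AL S) c a ->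
  sub_le (crho c (mpart (XF S) (pairing (XL S) (idm Z) m))) (Arr (pairing (XL S) (idm Z) m)).
Proof.
  intros Hsep.
  set (γ := pairing (XL S) (idm Z) m).
  destruct (prod_cmp S a a) as [s [Hs1 [Hs2 Hs3]]].
  set (h := pairing (XL S) (m ∘ pr1 (XL S) Z (Inc S a)) (pr2 (XL S) Z (Inc S a))).
  set (k := s ∘ F1 (Rf S) h).
  set (δ := diag (AL S) a).
  destruct (rho_univ S Z a m) as [g [Hg _]].
  assert (Hkγ : k ∘ F1 (Rf S) γ = δ ∘ g).
  { destruct (rho_univ S Z (prod (AL S) a a) (F1 (Inc S) δ ∘ m)) as [g0 [_ Hu]].
    rewrite (Hu (k ∘ F1 (Rf S) γ)), (Hu (δ ∘ g)); try reflexivity.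
    - rewrite F1_comp, <- comp_assoc, Hg. reflexivity.
    - unfold k. rewrite <- comp_assoc, <- F1_comp, F1_comp, <- comp_assoc, rho_nat, comp_assoc.
      assert (Hhγ : h ∘ γ = pairing (XL S) (F1 (Inc S) (pr1 (AL S) a a)) (F1 (Inc S) (pr2 (AL S) a a)) ∘ (F1 (Inc S) δ ∘ m)).
      { unfold h, γ, δ, diag. rewrite !pairing_comp, <- comp_assoc, pairing_pr1, comp_id_r, pairing_pr2.
        rewrite !comp_assoc, <- !F1_comp, pairing_pr1, pairing_pr2, F1_id, !comp_id_l. reflexivity. }
      rewrite Hhγ, comp_assoc, Hs3, comp_id_l. reflexivity. }
  set (Cl := cl c (mpart (AF S) (F1 (Rf S) (fm (XF S) γ)))).
  destruct (cl_cont c k (m := mpart (AF S) (F1 (Rf S) (fm (XF S) γ))) (fm_M _ _)) as [j1 Hj1].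
  assert (Hle : sub_le (image (AF S) k (mpart (AF S) (F1 (Rf S) (fm (XF S) γ)))) (mpart (AF S) δ)).
  { change (sub_le (mpart (AF S) (k ∘ fm (AF S) (F1 (Rf S) (fm (XF S) γ)))) (mpart (AF S) δ)).
    eapply sub_le_trans; [apply (mpart_le_compE _ _ _ (fe_E _ (F1 (Rf S) (fm (XF S) γ))))|].
    rewrite <- comp_assoc, fact_eq.
    eapply sub_le_trans; [apply (mpart_le_compE _ _ _ (RE_sub_F S _ _ _ (fe_E _ γ)))|].
    rewrite <- comp_assoc, <- F1_comp, fact_eq, Hkγ. apply mpart_comp_le. }
  destruct (cl_mono_mp c _ _ Hle) as [j2 Hj2].
  destruct Hsep as [[j3 Hj3] _].
  assert (HkCl : k ∘ amor Cl = δ ∘ (j3 ∘ j2 ∘ j1 ∘ fe (AF S) (k ∘ amor Cl))).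
  { transitivity (fm (AF S) (k ∘ amor Cl) ∘ fe (AF S) (k ∘ amor Cl)); [symmetry; apply fact_eq|].
    simpl in Hj1. fold Cl in Hj1. rewrite Hj1.
    change (amor (cl c (image (AF S) k (mpart (AF S) (F1 (Rf S) (fm (XF S) γ))))) = amor (cl c (mpart (AF S) δ)) ∘ j2) in Hj2.
    rewrite Hj2. change (amor (cl c (mpart (AF S) δ)) = δ ∘ j3) in Hj3. rewrite Hj3. lassoc. reflexivity. }
  destruct (crho_pb S c _ (mpart (XF S) γ)) as [Hcm _].
  simpl in Hcm. unfold clg in Hcm. fold Cl in Hcm.
  set (p := pb1 (XL S) (rho S (prod (XL S) Z (Inc S a))) (F1 (Inc S) (amor Cl))) in *.
  set (q := pb2 (XL S) (rho S (prod (XL S) Z (Inc S a))) (F1 (Inc S) (amor Cl))) in *.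
  set (J := j3 ∘ j2 ∘ j1 ∘ fe (AF S) (k ∘ amor Cl)) in *.
  assert (Hψh : (F1 (Inc S) s ∘ rho S _) ∘ h ∘ p = F1 (Inc S) δ ∘ (F1 (Inc S) J ∘ q)).
  { rewrite <- (comp_assoc _ (rho S _)), <- rho_nat. rassoc. rewrite Hcm.
    lassoc. rewrite <- !F1_comp. fold k. rewrite HkCl. reflexivity. }
  assert (HP1 : pr1 (XL S) _ _ ∘ (h ∘ p) = F1 (Inc S) J ∘ q).
  { transitivity (F1 (Inc S) (pr1 (AL S) a a) ∘ ((F1 (Inc S) s ∘ rho S _) ∘ h ∘ p)).
    { rewrite <- Hs1. lassoc. reflexivity. }
    rewrite Hψh. lassoc. rewrite <- F1_comp.
    unfold δ, diag. rewrite pairing_pr1, F1_id, comp_id_l. reflexivity. }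
  assert (HP2 : pr2 (XL S) _ _ ∘ (h ∘ p) = F1 (Inc S) J ∘ q).
  { transitivity (F1 (Inc S) (pr2 (AL S) a a) ∘ ((F1 (Inc S) s ∘ rho S _) ∘ h ∘ p)).
    { rewrite <- Hs2. lassoc. reflexivity. }
    rewrite Hψh. lassoc. rewrite <- F1_comp.
    unfold δ, diag. rewrite pairing_pr2, F1_id, comp_id_l. reflexivity. }
  exists (pr1 (XL S) _ _ ∘ p). simpl. fold p.
  apply pairing_ext.
  - unfold γ. rewrite comp_assoc, pairing_pr1, comp_id_l. reflexivity.
  - unfold γ. rewrite comp_assoc, pairing_pr2.
    rewrite comp_assoc, <- HP1 in HP2. unfold h in HP2.
    rewrite !comp_assoc, pairing_pr1, pairing_pr2 in HP2. rewrite comp_assoc. exact HP2.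
Qed.


Lemma A_compact (S : Setting) (c : ClosureOp (AF S)) (a : A S) :
  compact (XL S) (XF S) (crho c) (Inc S a) -> compact (AL S) (AF S) (@cl _ _ c) a.
Proof.
  intros Hr Y n Hn. destruct n as [nd nn]. simpl in Hn.
  split; [apply cl_cont; exact Hn|].
  destruct (prod_cmp S a Y) as [s [Hs1 [Hs2 Hs3]]].
  set (φ := pairing (XL S) (F1 (Inc S) (pr1 (AL S) a Y)) (F1 (Inc S) (pr2 (AL S) a Y))) in *.
  set (N := mpart (XF S) (φ ∘ F1 (Inc S) nn)).
  destruct (Hr (Inc S Y) N (fm_M _ _)) as [_ Hc2].
  set (π := pr2 (AL S) a Y).
  set (g0 := π ∘ nn).
  set (ClA := cl c (mpart (AF S) g0)).
  set (G := pr2 (XL S) _ _ ∘ fm (XF S) (φ ∘ F1 (Inc S) nn)).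
  apply (lift_le S).
  assert (St1 : sub_le (Arr (F1 (Inc S) (amor ClA))) (crho c (image (XF S) (pr2 (XL S) _ _) N))).
  { destruct (Inc_full S _ _ (rho S (Inc S Y))) as [rY HrY].
    destruct (Inc_full S _ _ (rho S (Inc S nd))) as [rd Hrd].
    set (Cl' := cl c (mpart (AF S) (F1 (Rf S) (fm (XF S) G)))).
    destruct (cl_cont c rY (m := mpart (AF S) g0) (fm_M _ _)) as [j1 Hj1].
    assert (Hle : sub_le (image (AF S) rY (mpart (AF S) g0)) (mpart (AF S) (F1 (Rf S) (fm (XF S) G)))).
    { change (sub_le (mpart (AF S) (rY ∘ fm (AF S) g0)) (mpart (AF S) (F1 (Rf S) (fm (XF S) G)))).
      eapply sub_le_trans; [apply (mpart_le_compE _ _ _ (fe_E _ g0))|].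
      rewrite <- comp_assoc, fact_eq, <- (r_nat S _ _ g0 rd rY Hrd HrY).
      assert (HIg : F1 (Inc S) g0 = fm (XF S) G ∘ (fe (XF S) G ∘ fe (XF S) (φ ∘ F1 (Inc S) nn))).
      { rewrite comp_assoc, fact_eq. unfold G. rewrite <- comp_assoc, fact_eq, comp_assoc.
        unfold φ. rewrite pairing_pr2. unfold g0. apply F1_comp. }
      rewrite HIg, F1_comp, <- comp_assoc. apply mpart_comp_le. }
    destruct (cl_mono_mp c _ _ Hle) as [j2 Hj2].
    assert (Hk : rY ∘ amor ClA = amor Cl' ∘ (j2 ∘ j1 ∘ fe (AF S) (rY ∘ amor ClA))).
    { transitivity (fm (AF S) (rY ∘ amor ClA) ∘ fe (AF S) (rY ∘ amor ClA)); [symmetry; apply fact_eq|].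
      simpl in Hj1. fold ClA in Hj1. rewrite Hj1.
      change (amor (cl c (image (AF S) rY (mpart (AF S) g0))) = amor Cl' ∘ j2) in Hj2.
      rewrite Hj2. lassoc. reflexivity. }
    destruct (crho_pb S c _ (image (XF S) (pr2 (XL S) _ _) N)) as [_ Hu].
    edestruct (Hu _ (F1 (Inc S) (amor ClA)) (F1 (Inc S) (j2 ∘ j1 ∘ fe (AF S) (rY ∘ amor ClA))))
      as [u [[U1 _] _]].
    2:{ exists u. simpl. symmetry. exact U1. }
    rewrite <- HrY, <- !F1_comp. f_equal. exact Hk. }
  assert (St3 : sub_le (image (XF S) (pr2 (XL S) _ _) (crho c N))
                       (Arr (F1 (Inc S) (fm (AF S) (π ∘ amor (cl c (Arr nn))))))).
  { set (ClN := cl c (mpart (AF S) (F1 (Rf S) (fm (XF S) (φ ∘ F1 (Inc S) nn))))).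
    destruct (cl_cont c s (m := mpart (AF S) (F1 (Rf S) (fm (XF S) (φ ∘ F1 (Inc S) nn)))) (fm_M _ _)) as [j1 Hj1].
    destruct (rho_Inc_inv S nd) as [rd' [Hrd1 Hrd2]].
    assert (Heq : s ∘ F1 (Rf S) (φ ∘ F1 (Inc S) nn) = nn ∘ rd').
    { apply (Inc_faithful S).
      transitivity (F1 (Inc S) (s ∘ F1 (Rf S) (φ ∘ F1 (Inc S) nn)) ∘ (rho S _ ∘ F1 (Inc S) rd')).
      { rewrite Hrd2, comp_id_r. reflexivity. }
      rewrite comp_assoc, F1_comp, <- (comp_assoc (F1 (Inc S) s)), rho_nat.
      rewrite !comp_assoc, Hs3, comp_id_l, F1_comp. reflexivity. }
    assert (Hle : sub_le (image (AF S) s (mpart (AF S) (F1 (Rf S) (fm (XF S) (φ ∘ F1 (Inc S) nn))))) (Arr nn)).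
    { change (sub_le (mpart (AF S) (s ∘ fm (AF S) (F1 (Rf S) (fm (XF S) (φ ∘ F1 (Inc S) nn))))) (Arr nn)).
      eapply sub_le_trans; [apply (mpart_le_compE _ _ _ (fe_E _ _))|].
      rewrite <- comp_assoc, fact_eq.
      eapply sub_le_trans; [apply (mpart_le_compE _ _ _ (RE_sub_F S _ _ _ (fe_E _ (φ ∘ F1 (Inc S) nn))))|].
      rewrite <- comp_assoc, <- F1_comp, fact_eq, Heq.
      apply (mpart_le_M _ _ _ rd' Hn). reflexivity. }
    destruct (cl_mono c (m := mpart (AF S) _) (n := Arr nn) (fm_M _ _) Hn Hle) as [j2 Hj2].
    assert (Hk : s ∘ amor ClN = amor (cl c (Arr nn)) ∘ (j2 ∘ j1 ∘ fe (AF S) (s ∘ amor ClN))).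
    { transitivity (fm (AF S) (s ∘ amor ClN) ∘ fe (AF S) (s ∘ amor ClN)); [symmetry; apply fact_eq|].
      simpl in Hj1. fold ClN in Hj1. rewrite Hj1.
      change (amor (cl c (image (AF S) s (mpart (AF S) (F1 (Rf S) (fm (XF S) (φ ∘ F1 (Inc S) nn))))))
        = amor (cl c (Arr nn)) ∘ j2) in Hj2.
      rewrite Hj2. lassoc. reflexivity. }
    destruct (crho_pb S c _ N) as [Hcm _]. simpl in Hcm. unfold clg in Hcm. fold ClN in Hcm.
    change (sub_le (mpart (XF S) (pr2 (XL S) _ _ ∘ amor (crho c N)))
                   (Arr (F1 (Inc S) (fm (AF S) (π ∘ amor (cl c (Arr nn))))))).
    apply (mpart_le_M _ _ _ (F1 (Inc S) (fe (AF S) (π ∘ amor (cl c (Arr nn))) ∘ (j2 ∘ j1 ∘ fe (AF S) (s ∘ amor ClN))) ∘ pb2 (XL S) (rho S _) (F1 (Inc S) (amor ClN)))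
             (N_sub_M S _ _ _ (fm_M _ _))).
    rewrite <- Hs2. simpl. rassoc. unfold clg. fold ClN. rewrite Hcm. lassoc. rewrite <- !F1_comp.
    f_equal. apply (f_equal (F1 (Inc S))).
    transitivity (π ∘ (amor (cl c (Arr nn)) ∘ (j2 ∘ j1 ∘ fe (AF S) (s ∘ amor ClN)))).
    { rewrite <- Hk. symmetry. apply comp_assoc. }
    lassoc. rewrite fact_eq. reflexivity. }
  eapply sub_le_trans; [exact St1|]. eapply sub_le_trans; [exact Hc2|]. exact St3.
Qed.


Theorem proposition2p6 :
  forall (S : Setting), E_pullback_stable S ->
  forall (c : ClosureOp (AF S)) (x : X S),
    compact (XL S) (XF S) (crho c) x ->
  forall (REx : X S) (rhoE : hom x REx) (rhoM : hom REx (Inc S (Rf S x))),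
    fE (XF S) rhoE -> fM (XF S) rhoM -> rhoM ∘ rhoE = rho S x ->
    compact (XL S) (XF S) (crho c) REx /\
    (c_separated (AL S) c (Rf S x) ->
       fE (XF S) (rho S x) /\ compact (AL S) (AF S) (@cl _ _ c) (Rf S x)).
Proof.
  intros S HE c x Hx REx rhoE rhoM HEe HMm Hfac.
  assert (Ha : compact (XL S) (XF S) (crho c) REx).
  { exact (E_image_compact (XL S) (XF S) HE (@crho S c) (crho_mono S c) (crho_cont S c) x REx rhoE HEe Hx). }
  split; [exact Ha|]. intros Hsep.
  set (a := Rf S x) in *.
  set (γ := pairing (XL S) (idm REx) rhoM).
  destruct (Ha (Inc S a) (mpart (XF S) γ) (fm_M _ _)) as [_ Hc2].
  assert (Htop : sub_le (Arr (idm (Inc S a))) (image (XF S) (pr2 (XL S) REx (Inc S a)) (crho c (mpart (XF S) γ)))).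
  { eapply sub_le_trans; [|exact Hc2].
    apply (crho_top S c x _ (fm (XF S) (pr2 (XL S) REx (Inc S a) ∘ fm (XF S) γ))
             (fe (XF S) (pr2 (XL S) REx (Inc S a) ∘ fm (XF S) γ) ∘ fe (XF S) γ ∘ rhoE)).
    lassoc. rewrite fact_eq, <- (comp_assoc (pr2 _ _ _)), fact_eq. unfold γ. rewrite pairing_pr2. exact Hfac. }
  assert (Hle : sub_le (image (XF S) (pr2 (XL S) REx (Inc S a)) (crho c (mpart (XF S) γ))) (Arr rhoM)).
  { eapply sub_le_trans; [apply image_mono; apply (graph_closed S c a REx rhoM Hsep)|].
    change (sub_le (mpart (XF S) (pr2 (XL S) REx (Inc S a) ∘ γ)) (Arr rhoM)).
    apply (mpart_le_M _ _ _ (idm _) HMm). unfold γ. rewrite pairing_pr2, comp_id_r. reflexivity. }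
  destruct (sub_le_trans _ _ _ Htop Hle) as [w Hw]. simpl in Hw.
  destruct (M_split_epi_iso (XF S) (XF_proper S) rhoM w HMm (eq_sym Hw)) as [mi [Hmi1 Hmi2]].
  assert (HEr : fE (XF S) (rho S x)).
  { apply (HE _ _ _ _ mi rhoE (rho S x) (idm x)).
    - split.
      + rewrite <- Hfac, comp_assoc, Hmi1, comp_id_l, comp_id_r. reflexivity.
      + intros q q1 q2 Hq. exists q2. split; [split|].
        * rewrite <- Hfac, <- comp_assoc, <- Hq, comp_assoc, Hmi2, comp_id_l. reflexivity.
        * apply comp_id_l.
        * intros u' _ H2. rewrite comp_id_l in H2. exact H2.
    - exact HEe. }
  split; [exact HEr|].
  apply A_compact.
  exact (E_image_compact (XL S) (XF S) HE (@crho S c) (crho_mono S c) (crho_cont S c) x _ (rho S x) HEr Hx).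
Qed.
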